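(* There exist a countable submetrizable ($T_1$, regular) space $X$ and a continuous surjective map $f\colon X\to S_\omega$ which is compact and sequence-covering but not 1-sequence-covering.
   Context: $\omega$ denotes the set of natural numbers. The sequential fan $S_\omega$ is the set $\{0\}\cup\omega^2$ (where $0$ is a point not in $\omega^2$) with the topology generated by the base consisting of all singletons $\{x\}$ with $x\in\omega^2$ together with all sets $\{0\}\cup\{\langle n,k\rangle : n\in\omega,\ k\ge g(n)\}$ for $g\colon\omega\to\omega$. A space $\langle X,\tau_X\rangle$ is submetrizable if there is a metrizable topology $\sigma\subseteq\tau_X$ on $X$. A map is compact if all its fibers are compact. For a space $Z$ and $z\in Z$, $\mathsf{ConvSeq}(Z,z)$ is the set of non-trivial (not eventually constant) sequences in $Z$ converging to $z$, and $\mathsf{ConvSeq}(Z)=\bigcup_{z}\mathsf{ConvSeq}(Z,z)$. A sequence $q$ in $X$ covers a sequence $p$ in $Y$ (with respect to $f\colon X\to Y$) if $f(q(n))=p(n)$ for all $n$. $f$ is sequence-covering if every $p\in\mathsf{ConvSeq}(Y)$ is covered by some $q\in\mathsf{ConvSeq}(X)$; $f$ is 1-sequence-covering if for every $y\in Y$ there is $x\in f^{-1}(y)$ such that every $p\in\mathsf{ConvSeq}(Y,y)$ is covered by some $q\in\mathsf{ConvSeq}(X,x)$. *)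

(* Defs.v *)
From HB Require Import structures.
From mathcomp Require Import all_boot all_order all_algebra.
From mathcomp Require Import all_classical all_reals topology Rstruct Rstruct_topology.
Set Implicit Arguments. Unset Strict Implicit. Unset Printing Implicit Defensive.
Import Order.TTheory GRing.Theory Num.Theory.
Local Open Scope classical_set_scope.
Local Open Scope ring_scope.

(* The sequential fan S_omega: the point 0 is [None], the point <n,k> of omega^2
   is [Some (n,k)]. *)
Definition sfan : Type := option (nat * nat).
HB.instance Definition _ := Choice.on sfan.

(* Index set of the base: a function g : omega -> omega together with a point
   p of omega^2 and a flag; flag true gives the basic neighbourhood of 0
   determined by g, flag false gives the singleton {p}. *)
Definition sfan_idx : Type := ((nat -> nat) * (nat * nat) * bool)%type.

Definition sfan_base (i : sfan_idx) : set sfan :=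
  let: (g, p, flag) := i in
  if flag then [set z | z = None \/ exists n k, (g n <= k)%N /\ z = Some (n, k)]
  else [set Some p].

Lemma sfan_base_cover : \bigcup_(i in [set: sfan_idx]) sfan_base i = setT.
Proof.
apply/seteqP; split => // z _; case: z => [p|].
- by exists (fun _ => 0%N, p, false).
- by exists (fun _ => 0%N, (0,0)%N, true) => //=; left.
Qed.

Lemma sfan_base_join (i j : sfan_idx) (t : sfan) :
  [set: sfan_idx] i -> [set: sfan_idx] j -> sfan_base i t -> sfan_base j t ->
  exists k, [/\ [set: sfan_idx] k, sfan_base k t & sfan_base k `<=` sfan_base i `&` sfan_base j].
Proof.
move=> _ _; case: i => [[g p] [|]]; case: j => [[h q] [|]] /=.
- move=> Hi Hj; exists (fun n => maxn (g n) (h n), p, true); split => //=.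
  + case: Hi => [->|[n [k [gk Et]]]]; first by left.
    case: Hj => [Et'|[n' [k' [hk' Et']]]]; first by rewrite Et in Et'.
    rewrite Et in Et' *; case: Et' => En Ek; subst n' k'; right; exists n, k.
    by split => //; rewrite geq_max gk hk'.
  + move=> z [->|[n [k [gk ->]]]]; first by split; left.
    by split; right; exists n, k; split => //; move: gk; rewrite geq_max => /andP[].
- move=> Hi Ht; subst t; exists (h, q, false); split => //= z ->; split => //; exact: Hi.
- move=> Ht Hj; subst t; exists (g, p, false); split => //= z ->; split => //; exact: Hj.
- move=> Hp Hq; subst t; exists (g, p, false); split => //= z ->; split => //; exact: Hq.
Qed.

HB.instance Definition _ := isPointed.Build sfan_idx (fun _ => 0%N, (0, 0)%N, false).
HB.instance Definition _ := isBaseTopological.Build sfan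
  sfan_base_cover sfan_base_join.

(* A space is submetrizable if it admits a metrizable topology coarser than its
   own: a (real-valued) metric all of whose open balls are open in X. *)
Definition submetrizable (X : topologicalType) : Prop :=
  exists d : X -> X -> Rdefinitions.R,
    [/\ (forall x, d x x = 0),
        (forall x y, d x y = 0 -> x = y),
        (forall x y, d x y = d y x),
        (forall x y z, d x z <= d x y + d y z) &
        (forall x (e : Rdefinitions.R), 0 < e -> open [set y | d x y < e])].

Definition ConvSeq (Z : topologicalType) (z : Z) (q : nat -> Z) : Prop :=
  (q @ \oo --> z) /\ ~ (exists (N : nat) (c : Z), forall n, (N <= n)%N -> q n = c).

Definition covers (X Y : Type) (f : X -> Y) (q : nat -> X) (p : nat -> Y) : Prop :=
  forall n, f (q n) = p n.

Definition compact_map (X Y : topologicalType) (f : X -> Y) : Prop :=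
  forall y, compact (f @^-1` [set y]).

Definition sequence_covering (X Y : topologicalType) (f : X -> Y) : Prop :=
  forall (y : Y) (p : nat -> Y), ConvSeq y p ->
    exists (x : X) (q : nat -> X), ConvSeq x q /\ covers f q p.

Definition one_sequence_covering (X Y : topologicalType) (f : X -> Y) : Prop :=
  forall y : Y, exists x : X, f x = y /\
    forall p : nat -> Y, ConvSeq y p -> exists q : nat -> X, ConvSeq x q /\ covers f q p.

(* Main.v *)
Require Import Defs.
From HB Require Import structures.
From mathcomp Require Import all_boot all_order all_algebra.
From mathcomp Require Import all_classical all_reals topology Rstruct Rstruct_topology.
From mathcomp Require Import lra zify.
From Stdlib Require Import Classical.
Set Implicit Arguments. Unset Strict Implicit. Unset Printing Implicit Defensive.
Import Order.TTheory GRing.Theory Num.Theory.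
Local Open Scope classical_set_scope.
Local Open Scope ring_scope.

Inductive XT := Top | Mid of nat | Pt of nat & nat & nat.
Definition encX (x : XT) : option nat + nat * nat * nat :=
  match x with Top => inl None | Mid n => inl (Some n) | Pt a j b => inr (a, j, b) end.
Definition decX (y : option nat + nat * nat * nat) : XT :=
  match y with inl None => Top | inl (Some n) => Mid n | inr (a, j, b) => Pt a j b end.
Lemma encXK : cancel encX decX. Proof. by case. Qed.
HB.instance Definition _ := Countable.copy XT (can_type encXK).

Definition Binf (N : nat) (h : nat -> nat) : set XT :=
  [set z | match z with Top => True | Mid m => (N <= m)%N
           | Pt a j b => (N <= a + b)%N /\ (h (a + b) <= j)%N end].
Definition Bmid (n h : nat) : set XT :=
  [set z | match z with Top => False | Mid m => m = n
           | Pt a j b => (a + b)%N = n /\ (h <= j)%N end].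
Definition opX (U : set XT) :=
  (U Top -> exists N h, Binf N h `<=` U) /\
  (forall n, U (Mid n) -> exists h, Bmid n h `<=` U).

Lemma opXT : opX setT.
Proof. split => [_|n _]; [exists 0%N, (fun _ => 0%N)|exists 0%N]; by []. Qed.

Lemma opXI : setI_closed opX.
Proof.
move=> A B [A1 A2] [B1 B2]; split.
- move=> [/A1 [N1 [h1 H1]] /B1 [N2 [h2 H2]]].
  exists (maxn N1 N2), (fun n => maxn (h1 n) (h2 n)) => z Hz; split.
  + apply: H1; case: z Hz => //= [m|a j b]; rewrite ?geq_max.
    * by case/andP.
    * by case=> /andP[? _] /andP[? _].
  + apply: H2; case: z Hz => //= [m|a j b]; rewrite ?geq_max.
    * by case/andP.
    * by case=> /andP[_ ?] /andP[_ ?].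
- move=> n [/A2 [h1 H1] /B2 [h2 H2]].
  exists (maxn h1 h2) => z Hz; split.
  + apply: H1; case: z Hz => //= a j b; rewrite geq_max; by case=> ? /andP[].
  + apply: H2; case: z Hz => //= a j b; rewrite geq_max; by case=> ? /andP[].
Qed.

Lemma opXU (I : Type) (f : I -> set XT) : (forall i, opX (f i)) ->
  opX (\bigcup_i f i).
Proof.
move=> Hf; split.
- move=> [i _ /(proj1 (Hf i)) [N [h H]]]; exists N, h => z /H ?; by exists i.
- move=> n [i _ /(proj2 (Hf i) n) [h H]]; exists h => z /H ?; by exists i.
Qed.

HB.instance Definition _ := isOpenTopological.Build XT opXT opXI opXU.

Lemma openXE (U : set XT) : open U = opX U.
Proof. reflexivity. Qed.
Lemma nbhsXE (x : XT) U : nbhs x U = exists B, [/\ opX B, B x & B `<=` U].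
Proof. reflexivity. Qed.
Lemma opensfanE (A : set sfan) : open A = exists2 D', D' `<=` [set: sfan_idx] & \bigcup_(i in D') sfan_base i = A.
Proof. reflexivity. Qed.

Definition fX (x : XT) : sfan :=
  match x with Top => None | Mid _ => None | Pt a j b => Some (a, (j + b)%N) end.

Definition Ng (g : nat -> nat) : set sfan :=
  [set z | z = None \/ exists n k, (g n <= k)%N /\ z = Some (n, k)].

Lemma Ng_nbhs g : nbhs (None : sfan) (Ng g).
Proof.
exists (Ng g); split => //; last by left.
exists [set (g, (0,0)%N, true)] => //.
apply/seteqP; split => z.
- by case=> i -> /=.
- by move=> Hz; exists (g, (0,0)%N, true).
Qed.

Lemma nbhs_None (U : set sfan) : nbhs (None : sfan) U -> exists g, Ng g `<=` U.
Proof.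
case=> B [[D _ <-] [i Di Hi] BU].
move: Hi; case: i Di => [[g p] [|]] Di /= Hi; last by [].
exists g => z Hz; apply: BU; exists (g, p, true) => //.
Qed.

Lemma nbhs_Some (p : nat * nat) : nbhs (Some p : sfan) [set Some p].
Proof.
exists [set Some p]; split => //.
exists [set ((fun _ => 0%N), p, false)] => //.
apply/seteqP; split => z.
- by case=> i -> /=.
- by move=> Hz; exists ((fun _ => 0%N), p, false).
Qed.

Lemma nbhsX_op (x : XT) U : opX U -> U x -> nbhs x U.
Proof. by move=> oU Ux; rewrite nbhsXE; exists U; split. Qed.

Lemma Binf_op N h : opX (Binf N h).
Proof.
split => [_|m Hm]; first by exists N, h.
move: Hm => /= Hm; exists (h m) => z; case: z => //= [m0 ->|a j b [Hab ?]] //; by rewrite Hab.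
Qed.

Lemma Bmid_op n h : opX (Bmid n h).
Proof.
split => [//|m /= ->]; by exists h.
Qed.

Lemma Pt_op a j b : opX [set Pt a j b].
Proof. by split => [|m]. Qed.

Lemma cvg_natP (T : topologicalType) (p : nat -> T) (y : T) :
  p @ \oo --> y <-> forall U, nbhs y U -> exists N, forall n, (N <= n)%N -> U (p n).
Proof.
split.
- move=> H U /H [N _ HN]; by exists N.
- move=> H U /H [N HN]; exists N => // n /= Hn; exact: HN.
Qed.

Notation RR := Rdefinitions.R.

Definition invS (n : nat) : RR := (n.+1%:R)^-1.

Lemma invS_gt0 n : 0 < invS n.
Proof. by rewrite /invS invr_gt0 ltr0n. Qed.

Lemma invS_le m n : (n <= m)%N -> invS m <= invS n.
Proof.
move=> H; rewrite /invS lef_pV2 ?posrE ?ltr0n // ler_nat; by [].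
Qed.

Lemma invS_small (e : RR) : 0 < e -> exists K, invS K < e.
Proof.
move=> e0; exists (Num.truncn (e^-1)); rewrite /invS.
rewrite -[ltRHS]invrK ltf_pV2 ?posrE ?invr_gt0 ?ltr0n //.
exact: truncnS_gt.
Qed.

Definition hd (T : eqType) (w : T -> RR) (s t : T) : RR :=
  if s == t then 0 else w s + w t.

Section HD.
Variables (T : eqType) (w : T -> RR) (w0 : forall s, 0 <= w s).

Lemma hd_ge0 s t : 0 <= hd w s t.
Proof. rewrite /hd; case: ifP => _ //; have := w0 s; have := w0 t; lra. Qed.

Lemma hd_xx s : hd w s s = 0.
Proof. by rewrite /hd eqxx. Qed.

Lemma hd_sym s t : hd w s t = hd w t s.
Proof. by rewrite /hd eq_sym addrC. Qed.

Lemma hd_tri s t u : hd w s u <= hd w s t + hd w t u.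
Proof.
rewrite /hd; have := w0 s; have := w0 t; have := w0 u.
case: (eqVneq s t) => [<-|st]; case: (eqVneq s u) => [<-|su];
  rewrite ?eqxx //; try lra; case: (eqVneq t u) => [tu|tu]; rewrite ?tu ?eqxx; try lra.
all: case: ifP => _; lra.
Qed.
End HD.

Definition w1 (s : sfan) : RR := if s is Some (_, k) then invS k else 0.
Definition w2 (s : option nat) : RR := if s is Some n then invS n else 0.
Lemma w1_ge0 s : 0 <= w1 s.
Proof. by case: s => [[? ?]|] //=; apply/ltW/invS_gt0. Qed.
Lemma w2_ge0 s : 0 <= w2 s.
Proof. by case: s => [?|] //=; apply/ltW/invS_gt0. Qed.

Definition piX (x : XT) : option nat :=
  match x with Top => None | Mid n => Some n | Pt a j b => Some (a + b)%N end.

Definition dX (x y : XT) : RR := hd w1 (fX x) (fX y) + hd w2 (piX x) (piX y).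

Lemma dX_ge0 x y : 0 <= dX x y.
Proof. have := hd_ge0 w1_ge0 (fX x) (fX y); have := hd_ge0 w2_ge0 (piX x) (piX y); rewrite /dX; lra. Qed.

Lemma dX_xx x : dX x x = 0.
Proof. by rewrite /dX !hd_xx addr0. Qed.

Lemma dX_sym x y : dX x y = dX y x.
Proof. by rewrite /dX (hd_sym w1) (hd_sym w2). Qed.

Lemma dX_tri x y z : dX x z <= dX x y + dX y z.
Proof.
rewrite /dX; have := hd_tri w1_ge0 (fX x) (fX y) (fX z).
have := hd_tri w2_ge0 (piX x) (piX y) (piX z); lra.
Qed.

Lemma hd0 (T : eqType) (w : T -> RR) (w0 : forall s, 0 <= w s)
  (wz : forall s t, w s = 0 -> w t = 0 -> s = t) s t : hd w s t = 0 -> s = t.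
Proof.
rewrite /hd; case: (eqVneq s t) => // _ H.
apply: wz; have := w0 s; have := w0 t; lra.
Qed.

Lemma dX_eq0 x y : dX x y = 0 -> x = y.
Proof.
rewrite /dX => H.
have h1 := hd_ge0 w1_ge0 (fX x) (fX y); have h2 := hd_ge0 w2_ge0 (piX x) (piX y).
have E1 : hd w1 (fX x) (fX y) = 0 by lra.
have E2 : hd w2 (piX x) (piX y) = 0 by lra.
have {E1} := hd0 w1_ge0 _ E1; have {E2} := hd0 w2_ge0 _ E2.
have wz1 : forall s t, w1 s = 0 -> w1 t = 0 -> s = t.
  move=> [[? k]|] [[? kk]|] //= H1 H2; exfalso; first [have := invS_gt0 k; lra | have := invS_gt0 kk; lra].
have wz2 : forall s t, w2 s = 0 -> w2 t = 0 -> s = t.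
  move=> [k|] [kk|] //= H1 H2; exfalso; first [have := invS_gt0 k; lra | have := invS_gt0 kk; lra].
move=> /(_ wz2) E2 /(_ wz1) E1.
clear H h1 h2.
case: x E1 E2 => [|m|a j b]; case: y => [|m'|a' j' b'] //=.
- by move=> _ [->].
- move=> [E0 E1] [E2]; subst a'; have Eb : b = b' by lia. subst b'; have Ej : j = j' by lia. by subst j'.
Qed.

Lemma near_Top (e : RR) : 0 < e -> exists N h, forall z, Binf N h z -> dX Top z < e.
Proof.
move=> e0; have [K HK] := (@invS_small (e / 2) ltac:(lra)).
exists K, (fun _ => K) => -[|m|a j b] /=.
- rewrite dX_xx; lra.
- move=> Km; rewrite /dX /hd /=; have := invS_le Km; lra.
- move=> [Kab Kj]; rewrite /dX /hd /=.
  have := invS_le Kab; have : (K <= j + b)%N by lia.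
  move/invS_le; lra.
Qed.

Lemma near_Mid n (e : RR) : 0 < e -> exists h, forall z, Bmid n h z -> dX (Mid n) z < e.
Proof.
move=> e0; have [K HK] := invS_small e0.
exists K => -[|m|a j b] //=.
- move=> ->; rewrite dX_xx; lra.
- move=> [Eab Kj]; rewrite /dX /hd /= Eab eqxx.
  have : (K <= j + b)%N by lia.
  move/invS_le; lra.
Qed.

Lemma ball_open x (e : RR) : opX [set y | dX x y < e].
Proof.
split.
- move=> /= H; have [N [h Hh]] := (@near_Top (e - dX x Top) ltac:(lra)).
  exists N, h => z /Hh Hz /=; have := dX_tri x Top z; lra.
- move=> n /= H; have [h Hh] := (@near_Mid n (e - dX x (Mid n)) ltac:(lra)).
  exists h => z /Hh Hz /=; have := dX_tri x (Mid n) z; lra.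
Qed.

Lemma XT_submetrizable : submetrizable XT.
Proof.
exists dX; split.
- exact: dX_xx.
- exact: dX_eq0.
- exact: dX_sym.
- exact: dX_tri.
- by move=> x e _; rewrite openXE; exact: ball_open.
Qed.

Lemma XT_accessible : accessible_space XT.
Proof.
move=> x y xy; exists [set z | dX x z < dX x y]; split.
- by rewrite openXE; exact: ball_open.
- apply/mem_set => /=; rewrite dX_xx lt_neqAle dX_ge0 andbT.
  apply/negP => /eqP H; move/negP: xy; apply; apply/eqP; exact: dX_eq0.
- by apply/mem_set => /=; rewrite ltxx.
Qed.

Ltac crush := intros; lazymatch goal with |- ~ _ => intro | _ => idtac end; intros;
  repeat match goal with
  | H : _ /\ _ |- _ => destruct H
  | H : Pt _ _ _ = Pt _ _ _ |- _ => injection H; clear H; intros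
  end;
  try discriminate; subst; simpl in *; try lia.

Lemma Binf_cop N h : opX (~` Binf N h).
Proof.
split => [/= H|m /= Hm]; first by exfalso; apply: H.
exists 0%N => -[|m'|a j b] /=; crush.
Qed.

Lemma Bmid_cop n h : opX (~` Bmid n h).
Proof.
split => [_|m /= Hm].
- exists n.+1, (fun _ => 0%N) => -[|m'|a j b] /=; crush.
- exists 0%N => -[|m'|a j b] /=; crush.
Qed.

Lemma Pt_cop a j b : opX (~` [set Pt a j b]).
Proof.
split => [_|m /= Hm].
- exists (a + b).+1, (fun _ => 0%N) => -[|m'|a' j' b'] /=; crush.
- exists j.+1 => -[|m'|a' j' b'] /=; crush.
Qed.

Lemma clopen_base (x : XT) U : nbhs x U ->
  exists V, [/\ opX V, opX (~` V), V x & V `<=` U].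
Proof.
rewrite nbhsXE => -[B [oB Bx BU]]; case: x Bx => [|n|a j b] Bx.
- have [N [h Hh]] := oB.1 Bx; exists (Binf N h); split.
  + exact: Binf_op.
  + exact: Binf_cop.
  + by [].
  + by move=> z /Hh /BU.
- have [h Hh] := oB.2 n Bx; exists (Bmid n h); split.
  + exact: Bmid_op.
  + exact: Bmid_cop.
  + by [].
  + by move=> z /Hh /BU.
- exists [set Pt a j b]; split.
  + exact: Pt_op.
  + exact: Pt_cop.
  + by [].
  + by move=> z -> ; apply: BU.
Qed.

Lemma XT_regular : regular_space XT.
Proof.
move=> x U /clopen_base [V [oV cV Vx VU]].
exists V; first by apply: nbhsX_op.
have clV : closed V by rewrite -openC openXE.
by move/closure_id : clV => <-.
Qed.

Local Close Scope ring_scope.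

Fixpoint upto (g : nat -> nat) (n : nat) : nat :=
  if n is m.+1 then maxn (g n) (upto g m) else g 0%N.

Lemma upto_ge g a n : (a <= n)%N -> (g a <= upto g n)%N.
Proof.
elim: n => [|n IH]; first by rewrite leqn0 => /eqP ->.
rewrite leq_eqVlt => /orP[/eqP ->|]; first by rewrite /= leq_maxl.
rewrite ltnS => /IH H /=; exact: (leq_trans H (leq_maxr _ _)).
Qed.

Lemma fX_continuous : continuous fX.
Proof.
apply/continuousP => A oA; rewrite openXE; split.
- move=> /= AN.
  have nA : nbhs (None : sfan) A by exists A; split.
  have [g Hg] := nbhs_None nA.
  exists 0%N, (upto g) => -[|m|a j b] /= Hz; apply: Hg; first by left.
  + by left.
  + right; exists a, (j + b)%N; split => //.
    have := upto_ge g (leq_addr b a); case: Hz => _ H; lia.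
- move=> n /= AN.
  have nA : nbhs (None : sfan) A by exists A; split.
  have [g Hg] := nbhs_None nA.
  exists (upto g n) => -[|m|a j b] //= Hz; apply: Hg.
  right; exists a, (j + b)%N; split => //.
  case: Hz => Eab H; have := upto_ge g (leq_addr b a); rewrite Eab; lia.
Qed.

Lemma compact_Some (i k : nat) : compact (fX @^-1` [set Some (i, k)]).
Proof.
apply: finite_compact.
apply: (@sub_finite_set _ _ ((fun j => Pt i j (k - j)) @` `I_k.+1)).
  move=> -[|m|a j b] //= [<- E]; exists j => /=; first lia.
  congr Pt; lia.
apply: finite_image; exact: finite_II.
Qed.

Lemma not_cluster (F : set_system XT) x : ~ cluster F x ->
  exists A, F A /\ exists B, nbhs x B /\ (forall z, A z -> B z -> False).
Proof.
move=> ncl; apply: NNPP => H; apply: ncl => A B FA nB; apply: NNPP => H2.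
apply: H; exists A; split => //; exists B; split => // z Az Bz; apply: H2.
by exists z.
Qed.

Lemma compact_None : compact (fX @^-1` [set None]).
Proof.
move=> F PF FA.
case: (pselect (cluster F Top)) => [cT|ncT]; first by exists Top.
case: (pselect (exists m, cluster F (Mid m))) => [[m cm]|ncM]; first by exists (Mid m).
have [A0 [FA0 [B0 [nB0 dis0]]]] := not_cluster ncT.
have [N [h sub0]] : exists N h, Binf N h `<=` B0.
  move: nB0; rewrite nbhsXE => -[V [oV VT VB]].
  have [N [h Hh]] := oV.1 VT; exists N, h => z /Hh; exact: VB.
have hm : forall m, exists A, F A /\ ~ A (Mid m).
  move=> m; have [A [FA' [B [nB dis]]]] := not_cluster (fun c => ncM (ex_intro _ m c)).
  exists A; split => // Am; exact: dis Am (nbhs_singleton nB).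
have [Am HAm] := choice hm.
have FC : forall n, F [set z | fX z = None /\ A0 z /\ forall m, (m < n)%N -> Am m z].
  elim=> [|n IH].
    by apply: filterS (filterI FA FA0) => z [Hz H0]; split.
  apply: filterS (filterI IH (proj1 (HAm n))) => z [[Hz [H0 Hm]] Hn].
  do 2 split => //; move=> m; rewrite ltnS leq_eqVlt => /orP[/eqP->|] //; exact: Hm.
have [z [Hz [H0 Hm]]] := filter_ex (FC N).
case: z Hz H0 Hm => [|m|a j b] //= _ H0 Hm.
- exfalso; exact: (dis0 _ H0 (sub0 Top I)).
- exfalso; case: (leqP N m) => [Nm|mN].
  + exact: (dis0 _ H0 (sub0 (Mid m) Nm)).
  + exact: (proj2 (HAm m) (Hm m mN)).
Qed.

Lemma colbound (p : nat -> sfan) : p @ \oo --> (None : sfan) ->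
  exists M, forall n a k, p n = Some (a, k) -> (a < M)%N.
Proof.
move=> /cvg_natP Hp; apply: NNPP => H.
have H' : forall M, exists n, exists a k, p n = Some (a, k) /\ (M <= a)%N.
  move=> M; apply: NNPP => H2; apply: H; exists M => n a k E.
  rewrite ltnNge; apply/negP => Ma; apply: H2; by exists n, a, k.
have [nu Hnu] := choice H'.
pose rowIf a (s : sfan) := if s is Some (a', k) then (if a' == a then k else 0%N) else 0%N.
pose colOf (s : sfan) := if s is Some (a', _) then a' else 0%N.
pose g a := (\max_(M < a.+1) rowIf a (p (nu M))).+1.
have [N0 HN0] := Hp _ (Ng_nbhs g).
have nuN : forall M, (nu M < N0)%N.
  move=> M; rewrite ltnNge; apply/negP => le; have [a [k [E Ma]]] := Hnu M.
  have := HN0 _ le; rewrite E => -[//|[a' [k' [ga E']]]].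
  case: E' => ? ?; subst a' k'.
  have Ml : (M < a.+1)%N by rewrite ltnS.
  have := leq_bigmax (Ordinal Ml) (F := fun M' : 'I_a.+1 => rowIf a (p (nu M'))).
  rewrite /= E /= eqxx; move=> Hk; have := leq_ltn_trans Hk ga; by rewrite ltnn.
pose C := \max_(n < N0) colOf (p n).
have [a [k [E Ma]]] := Hnu C.+1.
have := leq_bigmax (Ordinal (nuN C.+1)) (F := fun n : 'I_N0 => colOf (p n)).
rewrite /= E /= -/C; lia.
Qed.

Lemma seqcov : sequence_covering fX.
Proof.
move=> y p [Hp Hnc]; case: y Hp => [[i k]|] Hp.
  exfalso; apply: Hnc.
  have [N HN] := (cvg_natP _ _).1 Hp _ (nbhs_Some (i, k)).
  by exists N, (Some (i, k)).
have [M HM] := colbound Hp.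
pose q n := match p n with None => Mid M
  | Some (a, k) => if (M - a <= k)%N then Pt a (k - (M - a)) (M - a) else Pt a k 0 end.
have cov : forall n, fX (q n) = p n.
  move=> n; rewrite /q; case: (p n) => [[a k]|] //=; case: ifP => /= H;
    congr Some; congr pair; lia.
exists (Mid M), q; split => //; split.
- apply/cvg_natP => U; rewrite nbhsXE => -[B [oB BM BU]].
  have [h Hh] := oB.2 M BM.
  have [N HN] := (cvg_natP _ _).1 Hp _ (Ng_nbhs (fun _ => h + M)%N).
  exists N => n Nn; apply/BU/Hh; rewrite /q; have := HN n Nn.
  have := HM n; case: (p n) => [[a k]|] //=.
  move=> aM [//|[a' [k' [hk [E1 E2]]]]]; subst a' k'.
  have aM' := aM _ _ erefl.
  have c : (M - a <= k)%N by lia.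
  rewrite c /=; split; lia.
- move=> [N [c Hc]]; apply: Hnc; exists N, (fX c) => n Nn.
  by rewrite -cov Hc.
Qed.

Lemma conv_col c : ConvSeq (None : sfan) (fun n => Some (c, n)).
Proof.
split.
- apply/cvg_natP => U /nbhs_None [g Hg]; exists (g c) => n gn; apply: Hg.
  by right; exists c, n.
- move=> [N [c' Hc]]; have E1 := Hc N (leqnn N); have E2 := Hc N.+1 (leqnSn N).
  rewrite -E2 in E1; case: E1; lia.
Qed.

Lemma not1 : ~ one_sequence_covering fX.
Proof.
move=> H; have [x [fx Hx]] := H None.
case: x fx Hx => [|m|a j b] fx Hx; last by [].
- have [q [[Hq _] cov]] := Hx _ (conv_col 0).
  have Hb : forall b, exists Nb, forall n, (Nb <= n)%N -> Binf b.+1 (fun _ => 0%N) (q n).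
    move=> b; move: Hq => /cvg_natP; apply; apply: nbhsX_op; [exact: Binf_op | by []].
  have [Nf HNf] := choice Hb.
  have [N HN] := (cvg_natP _ _).1 Hq _ (@nbhsX_op Top _ (Binf_op 0 Nf) I).
  have := HN N (leqnn N); have := cov N; case E: (q N) => [|m|a j b] //= [Ea Ejb] [_ Hj].
  subst a.
  have := HNf (0 + b)%N N ltac:(lia); rewrite E /=; lia.
- have [q [[Hq _] cov]] := Hx _ (conv_col m.+1).
  have [N HN] := (cvg_natP _ _).1 Hq _ (@nbhsX_op (Mid m) _ (Bmid_op m 0) erefl).
  have := HN N (leqnn N); have := cov N; case: (q N) => [|m'|a j b] //= [Ea _] [Eab _]; lia.
Qed.

Theorem mainTheorem2 :
  exists (X : topologicalType) (f : X -> sfan),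
    countable [set: X] /\ submetrizable X /\ accessible_space X /\
    regular_space X /\ continuous f /\ (forall y : sfan, exists x : X, f x = y) /\
    compact_map f /\ sequence_covering f /\ ~ one_sequence_covering f.
Proof.
exists XT, fX; split; first exact: countableP.
split; first exact: XT_submetrizable.
split; first exact: XT_accessible.
split; first exact: XT_regular.
split; first exact: fX_continuous.
split.
  move=> [[i k]|]; last by exists Top.
  by exists (Pt i k 0); rewrite /= addn0.
split.
  move=> [[i k]|]; [exact: compact_Some | exact: compact_None].
split; first exact: seqcov.
exact: not1.
Qed.
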